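(* Let $q$ be a prime power, $m\ge 2$, $1\le k\le n-1$, and let $\mathcal{C}\subseteq \mathbb{F}_{q^m}^n$ be a linear MRD code of dimension $k$, written as $\mathcal{C}=\mathrm{rs}[\,I_k\mid X\,]$ with $X\in\mathbb{F}_{q^m}^{k\times(n-k)}$ (its generator matrix in systematic form). Let $0<s<m$ with $\gcd(s,m)=1$. Then $\mathcal{C}$ is a generalized Gabidulin code with parameter $s$ if and only if $\mathrm{rk}(X^{(q^s)}-X) = 1$.
   Context: Fix an $\mathbb{F}_q$-basis $b_1,\dots,b_m$ of $\mathbb{F}_{q^m}$. The rank of $v\in\mathbb{F}_{q^m}^n$ is the rank of the matrix $M\in\mathbb{F}_q^{m\times n}$ with $v_j=\sum_i M_{ij}b_i$, and the rank distance is $d_R(u,v)=\mathrm{rk}(u-v)$. A linear rank-metric code of length $n$ and dimension $k$ is a $k$-dimensional $\mathbb{F}_{q^m}$-subspace of $\mathbb{F}_{q^m}^n$; it is MRD if its minimum rank distance equals $n-k+1$. Every linear MRD code has a unique generator matrix of the form $[\,I_k\mid X\,]$. $\mathrm{rs}(G)$ is the $\mathbb{F}_{q^m}$-row space of $G$. For a matrix $X$, $X^{(q^s)}$ is obtained by raising each entry to the $q^s$-th power. For $s$ coprime to $m$ and $g_1,\dots,g_n\in\mathbb{F}_{q^m}$ linearly independent over $\mathbb{F}_q$, the generalized Gabidulin code with parameter $s$ and dimension $k$ is the row space of the $k\times n$ matrix whose $(i,j)$ entry is $g_j^{q^{s(i-1)}}$, $i=1,\dots,k$. *)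

(* Defs.v *)
From HB Require Import structures.
From mathcomp Require Import all_boot all_order all_algebra all_field.
Set Implicit Arguments. Unset Strict Implicit. Unset Printing Implicit Defensive.
Import GRing.Theory.
Local Open Scope ring_scope.

(* Setting: F = F_q (a finite field), L = F_{q^m} a finite extension of F
   of degree m = \dim {:L}.  The fixed F-basis b_1..b_m of L is vbasis {:L}. *)

Section RankMetric.
Variables (F : finFieldType) (L : fieldExtType F).

Definition expand_mx (n : nat) (v : 'rV[L]_n) : 'M[F]_(\dim {:L}, n) :=
  \matrix_(i < \dim {:L}, j < n) coord (vbasis {:L}) i (v 0 j).

Definition rk (n : nat) (v : 'rV[L]_n) : nat := \rank (expand_mx v).

Definition dR (n : nat) (u v : 'rV[L]_n) : nat := rk (u - v).

Definition in_code (k n : nat) (G : 'M[L]_(k, n)) (c : 'rV[L]_n) : bool :=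
  (c <= G)%MS.

Definition min_rank_dist_eq (k n : nat) (G : 'M[L]_(k, n)) (d : nat) : Prop :=
  (forall u v, in_code G u -> in_code G v -> u != v -> (d <= dR u v)%N) /\
  (exists u v, [/\ in_code G u, in_code G v, u != v & dR u v = d]).

Definition is_MRD (k n : nat) (G : 'M[L]_(k, n)) : Prop :=
  \rank G = k /\ min_rank_dist_eq G (n - k + 1).

Definition gab_mx (k n s : nat) (g : 'rV[L]_n) : 'M[L]_(k, n) :=
  \matrix_(i < k, j < n) (g 0 j) ^+ (#|F| ^ (s * i)).

Definition is_gen_gabidulin (k n s : nat) (G : 'M[L]_(k, n)) : Prop :=
  exists g : 'rV[L]_n,
    free [seq g 0 j | j <- enum 'I_n] /\ (G == gab_mx k s g)%MS.

Definition frob_mx (s k r : nat) (X : 'M[L]_(k, r)) : 'M[L]_(k, r) :=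
  map_mx (fun x => x ^+ (#|F| ^ s)) X.

End RankMetric.

(* Main.v *)
Require Import Defs.
From HB Require Import structures.
From mathcomp Require Import all_boot all_order all_algebra all_field.
From mathcomp Require Import zify.
Set Implicit Arguments. Unset Strict Implicit. Unset Printing Implicit Defensive.
Import GRing.Theory.
Local Open Scope ring_scope.

Section Frob.
Variables (F : finFieldType) (L : fieldExtType F).
Local Notation q := #|F|.

Definition frob (e : nat) (x : L) : L := x ^+ (q ^ e).

Lemma frobS e x : frob e.+1 x = (frob e x) ^+ q.
Proof. by rewrite /frob expnSr exprM. Qed.

Lemma frob_zmod e : zmod_morphism (frob e).
Proof.
elim: e => [|e IH] x y; first by rewrite /frob !expn0 !expr1.
rewrite !frobS IH.
have [p _ pcharFp] := finPcharP F; rewrite (card_pprimeChar pcharFp).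
elim: (logn _ _) => [|n IHn]; first by rewrite !expr1.
rewrite expnSr !exprM {}IHn.
by rewrite -(pchar_lalg L) in pcharFp; rewrite -pFrobenius_autE rmorphB.
Qed.

Lemma frob_monoid e : monoid_morphism (frob e).
Proof. by rewrite /frob; split=> [|x y]; rewrite ?exprMn ?expr1n. Qed.

Definition frobRM e : {rmorphism L -> L} :=
  HB.pack (frob e) (GRing.isZmodMorphism.Build L L (frob e) (frob_zmod e))
   (GRing.isMonoidMorphism.Build L L (frob e) (frob_monoid e)).

Lemma frobRME e x : frobRM e x = frob e x. Proof. by []. Qed.

Lemma frobD e1 e2 x : frob e1 (frob e2 x) = frob (e2 + e1) x.
Proof. by rewrite /frob -exprM -expnD. Qed.

Lemma frob0 x : frob 0 x = x.
Proof. by rewrite /frob expn0 expr1. Qed.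

Lemma frob_alg e (a : F) : frob e a%:A = a%:A.
Proof.
rewrite /frob -in_algE -rmorphXn; congr (in_alg L _).
elim: e => [|e IH]; first by rewrite expn0 expr1.
by rewrite expnSr exprM IH expf_card.
Qed.

Lemma frobM e x y : frob e (x * y) = frob e x * frob e y.
Proof. by rewrite /frob exprMn. Qed.

Lemma frobZ e (a : F) x : frob e (a *: x) = a *: frob e x.
Proof. by rewrite -[a *: x]mulr_algl -[a *: frob e x]mulr_algl frobM frob_alg. Qed.

Lemma frob_full x : frob (\dim {:L}) x = x.
Proof.
apply/eqP; rewrite /frob.
have := Fermat's_little_theorem (aspacef L) x.
by rewrite memvf => <-.
Qed.

Lemma frob_mul_full v x : frob (\dim {:L} * v) x = x.
Proof.
elim: v => [|v IH]; first by rewrite muln0 frob0.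
by rewrite mulnS addnC -frobD IH frob_full.
Qed.

Lemma frob_mul (s u : nat) x : frob s x = x -> frob (s * u) x = x.
Proof.
move=> fx; elim: u => [|u IH]; first by rewrite muln0 frob0.
by rewrite mulnS addnC -frobD IH fx.
Qed.

Lemma frob_fixed s x : (0 < s)%N -> coprime s (\dim {:L}) ->
  frob s x = x -> x \in 1%VS.
Proof.
move=> s0 cop fx.
have : x ^+ q == x.
  case: (egcdnP (\dim {:L}) s0) => km kn /= Hkm _.
  rewrite (eqP cop) in Hkm.
  have := frob_mul km fx; rewrite mulnC Hkm addn1 frobS mulnC frob_mul_full.
  by move=> ->.
have := Fermat's_little_theorem 1%AS x.
by rewrite /= dimv1 expn1 => ->.
Qed.

Lemma frob_inv s x : frob s (frob (s * (\dim {:L}).-1) x) = x.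
Proof.
have m0 : (0 < \dim {:L})%N by exact: (adim_gt0 (aspacef L)).
by rewrite frobD -mulnSr prednK // mulnC frob_mul_full.
Qed.

Lemma frob_inj e : injective (frob e).
Proof. exact: (fmorph_inj (frobRM e)). Qed.

Definition bas := vbasis (aspacef L).

Lemma rkF n (w : 'rV[L]_n) : (forall j, w 0 j \in 1%VS) -> (rk w <= 1)%N.
Proof.
move=> Hw; rewrite /rk.
have -> : expand_mx w = (\col_i coord (vbasis {:L}) i 1) *m
     (\row_j coord [tuple 1] 0 (w 0 j)).
  apply/matrixP => i j; rewrite !mxE big_ord1 !mxE.
  have /vlineP[a ->] := Hw j.
  have c1 : coord [tuple (1 : L)] 0 1 = 1.
    by have := coord_free 0 0 (_ : free [tuple (1:L)]); rewrite seq1_free oner_neq0 /=; apply.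
  by rewrite !linearZ /= c1 mulr1 mulrC.
apply: leq_trans (mxrankM_maxl _ _) _; exact: rank_leq_col.
Qed.

Lemma lemA n p (c : 'rV[L]_n) (U : 'M[F]_(p, n)) :
  (forall l, \sum_j U l j *: c 0 j = 0) -> (rk c + \rank U <= n)%N.
Proof.
move=> HU.
have E0 : U *m (expand_mx c)^T = 0.
  apply/matrixP => l i; rewrite !mxE.
  transitivity (coord (vbasis {:L}) i (\sum_j U l j *: c 0 j)); last first.
    by rewrite HU linear0.
  by rewrite linear_sum; apply: eq_bigr => j _; rewrite !mxE linearZ.
have : (U <= kermx (expand_mx c)^T)%MS by apply/sub_kermxP.
move/mxrankS; rewrite mxrank_ker mxrank_tr /rk => H.
have := rank_leq_col (expand_mx c).
move: H; set a := \rank _; set b := \rank _ => H1 H2.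
by rewrite -(subnKC H2) leq_add2l.
Qed.

End Frob.

Lemma rank_blk (K : fieldType) (k r : nat) (X Y : 'M[K]_(k, r)) :
  \rank (col_mx (row_mx (1%:M : 'M[K]_k) X) (row_mx 1%:M Y)) = (k + \rank (Y - X)%R)%N.
Proof.
set P : 'M[K]_(k + k) := block_mx 1%:M 0 1%:M 1%:M.
set P' : 'M[K]_(k + k) := block_mx 1%:M 0 (-1%:M) 1%:M.
set Q : 'M[K]_(k + r) := block_mx 1%:M X 0 1%:M.
set Q' : 'M[K]_(k + r) := block_mx 1%:M (-X) 0 1%:M.
have E : col_mx (row_mx (1%:M : 'M[K]_k) X) (row_mx 1%:M Y) =
    P *m block_mx 1%:M 0 0 (Y - X) *m Q.
  rewrite -block_mxEv /P /Q !mulmx_block.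
  rewrite !(mul1mx, mulmx1, mul0mx, mulmx0, addr0, add0r).
  by rewrite addrC subrK.
have PP : P' *m P = 1%:M.
  rewrite /P /P' mulmx_block !(mul1mx, mulmx1, mul0mx, mulmx0, addr0, add0r).
  by rewrite addrC subrr -scalar_mx_block.
have QQ : Q *m Q' = 1%:M.
  rewrite /Q /Q' mulmx_block !(mul1mx, mulmx1, mul0mx, mulmx0, addr0, add0r).
  by rewrite addNr -scalar_mx_block.
rewrite E mxrankMfree; last by apply/row_freeP; exists Q'.
rewrite (eqmxMfull _ (_ : row_full P)); last by apply/row_fullP; exists P'.
by rewrite rank_diag_block_mx mxrank1.
Qed.

Section Main.
Variables (F : finFieldType) (L : fieldExtType F) (k r s : nat) (X : 'M[L]_(k, r)).
Local Notation n := (k + r)%N.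
Local Notation G := (row_mx (1%:M : 'M[L]_k) X).
Local Notation sig := (@frobRM F L s).
Hypotheses (hMRD : is_MRD G) (hr : (0 < r)%N) (hk : (0 < k)%N) (hs : (0 < s)%N)
  (cop : coprime s (\dim {:L})).

Lemma mrd_rk (c : 'rV[L]_n) : (c <= G)%MS -> c != 0 -> (r.+1 <= rk c)%N.
Proof.
move=> Hc nz; case: hMRD => _ [H _].
have := H c 0 Hc (sub0mx _ _) nz; rewrite /dR subr0.
by rewrite addKn addn1.
Qed.

Lemma nz_exists_entry (w : 'rV[L]_n) : w != 0 -> exists j, w 0 j != 0.
Proof.
move=> nz; case: (pickP (fun j => w 0 j != 0)) => [j Hj|H]; first by exists j.
case/negP: nz; apply/eqP/rowP => j; rewrite mxE; apply/eqP.
by have := H j; move/negbFE.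
Qed.

Lemma nz_exists_row p (W : 'M[L]_(p, n)) : W != 0 -> exists i, row i W != 0.
Proof.
move=> nz; case: (pickP (fun i => row i W != 0)) => [i Hi|H]; first by exists i.
case/negP: nz; apply/eqP/row_matrixP => i; rewrite row0; apply/eqP.
by have := H i; move/negbFE.
Qed.

Lemma Inv p (W : 'M[L]_(p, n)) : (W <= G)%MS -> (map_mx sig W <= W)%MS ->
  W != 0 -> False.
Proof.
move=> WG sW nzW.
suff claim : forall t (w : 'rV[L]_n), (#|[set j | w 0%R j != 0%R]| <= t)%N ->
    (w <= W)%MS -> w != 0 -> False.
  have [i Hi] := nz_exists_row nzW.
  apply: (claim n (row i W)) => //; last exact: row_sub.
  by apply: leq_trans (max_card _) _; rewrite card_ord.
elim=> [|t IH] w Hc Hw nz.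
  have [j Hj] := nz_exists_entry nz.
  move: Hc; rewrite leqn0 cards_eq0 => /eqP/setP/(_ j).
  by rewrite !inE Hj.
have [j0 Hj0] := nz_exists_entry nz.
set w' := (w 0 j0)^-1 *: w.
have w'W : (w' <= W)%MS by apply: scalemx_sub.
have w'1 : w' 0 j0 = 1 by rewrite mxE mulVf.
have nzw' : w' != 0.
  by apply/eqP => /rowP/(_ j0); rewrite w'1 mxE; apply/eqP; exact: oner_neq0.
set d := map_mx sig w' - w'.
have dW : (d <= W)%MS.
  apply: addmx_sub; first by apply: submx_trans sW; rewrite map_submx.
  by rewrite -scaleN1r; apply: scalemx_sub.
case: (eqVneq d 0) => [d0|nzd].
  have : (rk w' <= 1)%N.
    apply: rkF => j; apply: (frob_fixed hs cop).
    by move: (congr1 (fun M : 'rV[L]_n => M 0 j) d0); rewrite !mxE => /eqP; rewrite subr_eq0 => /eqP.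
  move=> A; have := leq_trans (mrd_rk (submx_trans w'W WG) nzw') A.
  by rewrite ltnS leqNgt hr.
apply: (IH d) => //.
have sub : [set j | d 0%R j != 0%R] \subset [set j | w 0%R j != 0%R] :\ j0.
  apply/subsetP => j; rewrite !inE.
  apply: contraR; rewrite negb_and negbK => /orP[/eqP->|wj0].
    by rewrite !mxE mulVf // rmorph1 subrr.
  by rewrite !mxE (eqP (negPn wj0)) mulr0 rmorph0 subrr.
apply: leq_trans (subset_leq_card sub) _.
move: Hc; rewrite (cardsD1 j0) inE Hj0 add1n ltnS; exact.
Qed.


Lemma rankG : \rank G = k.
Proof. by case: hMRD. Qed.

Lemma mapG : map_mx sig G = row_mx 1%:M (map_mx sig X).
Proof. by rewrite map_row_mx map_mx1. Qed.

Lemma rankGGs : \rank (col_mx G (map_mx sig G)) = (k + \rank (map_mx sig X - X)%R)%N.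
Proof. by rewrite mapG rank_blk. Qed.

Lemma G_nz : G != 0.
Proof.
apply/eqP => G0; have := rankG; rewrite G0 mxrank0 => k0.
by move: hk; rewrite -k0.
Qed.

Lemma D_nz : map_mx sig X - X != 0.
Proof.
apply/eqP => D0.
have E : map_mx sig G = G by rewrite mapG (subr0_eq D0).
by apply: (Inv (W:=G)) => //; [rewrite E | exact: G_nz].
Qed.

Lemma rankD_pos : (0 < \rank (map_mx sig X - X)%R)%N.
Proof. by rewrite lt0n mxrank_eq0 D_nz. Qed.

Lemma fwd (g : 'rV[L]_n) : (G == gab_mx k s g)%MS -> \rank (map_mx sig X - X)%R = 1%N.
Proof.
move=> /andP[GM _].
set M' := gab_mx k.+1 s g.
have MM' : (gab_mx k s g <= M')%MS.
  apply/row_subP => i.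
  have -> : row i (gab_mx k s g) = row (widen_ord (leqnSn k) i) M'.
    by apply/rowP => j; rewrite !mxE.
  exact: row_sub.
have sMM' : (map_mx sig (gab_mx k s g) <= M')%MS.
  apply/row_subP => i.
  have -> : row i (map_mx sig (gab_mx k s g)) = row (lift ord0 i) M'.
    apply/rowP => j; rewrite !mxE /= /frob -exprM -expnD.
    by rewrite /bump leq0n add1n mulnS [(s * i + s)%N]addnC.
  exact: row_sub.
have H : (col_mx G (map_mx sig G) <= M')%MS.
  rewrite col_mx_sub (submx_trans GM MM') andTb.
  by apply: submx_trans sMM'; rewrite map_submx.
have := leq_trans (mxrankS H) (rank_leq_row M').
rewrite rankGGs => H2.
have := rankD_pos; move: H2; lia.
Qed.

Fixpoint V (i : nat) : 'M[L]_n :=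
  if i is i'.+1 then (V i' :&: map_mx sig (V i'))%MS else <<G>>%MS.

Lemma V0r : \rank (V 0) = k.
Proof. by rewrite /= genmxE rankG. Qed.

Lemma V1r : \rank (map_mx sig X - X)%R = 1%N -> \rank (V 1) = k.-1.
Proof.
move=> hD1.
have := mxrank_sum_cap (V 0) (map_mx sig (V 0)); rewrite mxrank_map V0r.
have E : (V 0 + map_mx sig (V 0) :=: col_mx G (map_mx sig G))%MS.
  apply: eqmx_trans (addsmxE _ _); apply: adds_eqmx; first exact: genmxE.
  exact: eqmx_trans (map_genmx _ _) (genmxE _).
rewrite E rankGGs hD1 -[(V 0 :&: _)%MS]/(V 1).
move: hk; lia.
Qed.

Lemma Vstep i : (2 * \rank (V i.+1) <= \rank (V i) + \rank (V i.+2))%N.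
Proof.
have := mxrank_sum_cap (V i.+1) (map_mx sig (V i.+1)); rewrite mxrank_map.
have S : (V i.+1 + map_mx sig (V i.+1) <= map_mx sig (V i))%MS.
  have S1 : (V i.+1 <= map_mx sig (V i))%MS := capmxSr _ _.
  have S2 : (V i.+1 <= V i)%MS := capmxSl _ _.
  by rewrite addsmx_sub S1 map_submx S2.
have := mxrankS S; rewrite mxrank_map -[(V i.+1 :&: _)%MS]/(V i.+2).
lia.
Qed.

Lemma Vlow : \rank (map_mx sig X - X)%R = 1%N -> forall i, (k <= \rank (V i) + i)%N.
Proof.
move=> hD1.
suff H : forall i, (\rank (V i) <= \rank (V i.+1) + 1)%N /\ (k <= \rank (V i) + i)%N.
  by move=> i; case: (H i).
elim=> [|i [IH1 IH2]].
  by rewrite V1r // V0r; move: hk; lia.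
have := Vstep i; lia.
Qed.

Lemma Vpre i (v : 'rV[L]_n) : (v <= V i)%MS -> forall j, (j <= i)%N ->
  exists2 c : 'rV[L]_n, (c <= G)%MS & v = map_mx (frob (s * j)) c.
Proof.
elim: i v => [|i IH] v Hv j Hj.
  move: Hj; rewrite leqn0 => /eqP->; exists v; first by rewrite /= genmxE in Hv.
  by apply/rowP => l; rewrite mxE muln0 frob0.
move: Hv; rewrite [V i.+1]/= sub_capmx => /andP[Hv1 Hv2].
case: (leqP j i) => [ji|ij]; first exact: IH.
have -> : j = i.+1 by apply/eqP; rewrite eqn_leq Hj ij.
case/submxP: Hv2 => a Ea.
set a' := map_mx (frob (s * (\dim {:L}).-1)) a.
have Ea2 : v = map_mx sig (a' *m V i).
  rewrite map_mxM Ea; congr (_ *m _); apply/matrixP => x y.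
  by rewrite !mxE /= frob_inv.
have [c Hc Ec] := IH (a' *m V i) (submxMl _ _) i (leqnn i).
exists c => //; rewrite Ea2 Ec; apply/rowP => l; rewrite !mxE /= frobD.
by rewrite mulnS [(s * i + s)%N]addnC.
Qed.

Lemma exists_g : \rank (map_mx sig X - X)%R = 1%N -> exists g : 'rV[L]_n,
  g != 0 /\ forall i, (i < k)%N -> (map_mx (frob (s * i)) g <= G)%MS.
Proof.
move=> hD1.
have Hr : (0 < \rank (V k.-1))%N.
  have := Vlow hD1 k.-1; move: hk; lia.
have nz : V k.-1 != 0 by rewrite -mxrank_eq0 -lt0n.
have [i0 Hi0] := nz_exists_row nz.
have Hv : (row i0 (V k.-1) <= V k.-1)%MS := row_sub _ _.
have [g Hg Eg] := Vpre Hv (leqnn k.-1).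
exists g; split.
  apply: contra Hi0 => /eqP g0; rewrite Eg g0; apply/eqP/rowP => l.
  by rewrite !mxE; exact: (rmorph0 (@frobRM F L (s * k.-1))).
move=> i ik.
have jk : (k.-1 - i <= k.-1)%N := leq_subr _ _.
have [c Hc Ec] := Vpre Hv jk.
suff -> : map_mx (frob (s * i)) g = c by [].
apply/rowP => l; apply: (@frob_inj F L (s * (k.-1 - i))).
have := congr1 (fun M : 'rV[L]_n => M 0 l) (etrans (esym Ec) Eg).
rewrite !mxE => ->; rewrite frobD -mulnDr subnKC //.
by move: ik hk; lia.
Qed.

Lemma row_gab t (g : 'rV[L]_n) (i : 'I_t) :
  row i (gab_mx t s g) = map_mx (frob (s * i)) g.
Proof. by apply/rowP => j; rewrite !mxE. Qed.

Lemma gab_sub t (g : 'rV[L]_n) : (gab_mx t s g <= gab_mx t.+1 s g)%MS.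
Proof.
apply/row_subP => i; rewrite row_gab.
have -> : map_mx (frob (s * i)) g = row (widen_ord (leqnSn t) i) (gab_mx t.+1 s g).
  by rewrite row_gab.
exact: row_sub.
Qed.

Lemma gab_map_sub t (g : 'rV[L]_n) : (map_mx sig (gab_mx t s g) <= gab_mx t.+1 s g)%MS.
Proof.
apply/row_subP => i.
have -> : row i (map_mx sig (gab_mx t s g)) = row (lift ord0 i) (gab_mx t.+1 s g).
  apply/rowP => j; rewrite !mxE /= /frob -exprM -expnD.
  by rewrite /bump leq0n add1n mulnS [(s * i + s)%N]addnC.
exact: row_sub.
Qed.

Lemma gab_rank (g : 'rV[L]_n) : g != 0 ->
  (forall i, (i < k)%N -> (map_mx (frob (s * i)) g <= G)%MS) ->
  forall t, (t <= k)%N -> \rank (gab_mx t s g) = t.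
Proof.
move=> gnz Hrows.
have MG t : (t <= k)%N -> (gab_mx t s g <= G)%MS.
  move=> tk; apply/row_subP => i; rewrite row_gab; apply: Hrows.
  exact: leq_trans (ltn_ord i) tk.
elim=> [|t IH] tk.
  by apply/eqP; rewrite -leqn0; exact: rank_leq_row.
have IH' := IH (ltnW tk).
have le := mxrankS (gab_sub t g); rewrite IH' in le.
have up := rank_leq_row (gab_mx t.+1 s g).
case: (eqVneq (\rank (gab_mx t.+1 s g)) t) => [eq|neq]; last by move: le up neq; lia.
exfalso.
have : (gab_mx t s g == gab_mx t.+1 s g)%MS.
  by rewrite -(mxrank_leqif_eq (gab_sub t g)).2 IH' eq.
case/andP => _ Hback.
case: t IH IH' tk le up eq Hback => [|t] _ IH' tk le up eq Hback.
  move/eqP: eq; rewrite mxrank_eq0 => /eqP M0.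
  case/negP: gnz; apply/eqP.
  have := row_gab g (ord0 : 'I_1); rewrite M0 row0 => /esym E.
  by apply/rowP => j; move: (congr1 (fun M : 'rV[L]_n => M 0 j) E); rewrite !mxE muln0 frob0.
apply: (Inv (W := gab_mx t.+1 s g)).
- exact: MG (ltnW tk).
- exact: submx_trans (gab_map_sub _ _) Hback.
- by rewrite -mxrank_eq0 IH'.
Qed.

Lemma frob_sumZ e (u : 'I_n -> F) (x : 'I_n -> L) :
  frob e (\sum_j u j *: x j) = \sum_j u j *: frob e (x j).
Proof.
rewrite -frobRME (rmorph_sum (@frobRM F L e)).
by apply: eq_bigr => j _; rewrite frobRME frobZ.
Qed.

Lemma gab_rel (g : 'rV[L]_n) (u : 'I_n -> F) : \sum_j u j *: g 0 j = 0 ->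
  forall c : 'rV[L]_n, (c <= gab_mx k s g)%MS -> \sum_j u j *: c 0 j = 0.
Proof.
move=> Hu c /submxP[a ->].
transitivity (\sum_l a 0 l * frob (s * l) (\sum_j u j *: g 0 j)); last first.
  by apply: big1 => l _; rewrite Hu -frobRME rmorph0 mulr0.
under eq_bigr do rewrite mxE scaler_sumr.
rewrite exchange_big /=; apply: eq_bigr => l _.
rewrite frob_sumZ mulr_sumr; apply: eq_bigr => j _.
by rewrite mxE scalerAr.
Qed.

Lemma gab_free (g : 'rV[L]_n) : (G <= gab_mx k s g)%MS ->
  free [seq g 0 j | j <- enum 'I_n].
Proof.
move=> GM.
have -> : [seq g 0 j | j <- enum 'I_n] = [tuple g 0 j | j < n] :> seq L.
  by rewrite /mktuple /= ?val_ord_tuple.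
apply/freeP => u Hu i; apply: contraTeq isT => nzi.
have {}Hu : \sum_j u j *: g 0 j = 0.
  by rewrite -[RHS]Hu; apply: eq_bigr => j _; rewrite nth_mktuple.
have rel : forall c : 'rV[L]_n, (c <= G)%MS -> \sum_j u j *: c 0 j = 0.
  by move=> c Hc; apply: (gab_rel Hu); apply: submx_trans GM.
have [j1 Hj1] : exists j1, u (rshift k j1) != 0.
  case: (pickP (fun j1 => u (rshift k j1) != 0)) => [j1 H|H]; first by exists j1.
  exfalso; move/negP: nzi; apply; apply/eqP.
  have Hr : forall j1, u (rshift k j1) = 0.
    by move=> j1; have := H j1; move/negbFE/eqP.
  have Hl : forall i0 : 'I_k, u (lshift r i0) = 0.
    move=> i0; have := rel (row i0 G) (row_sub _ _).
    rewrite big_split_ord /= [X in _ + X]big1 ?addr0; last first.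
      by move=> j _; rewrite Hr scale0r.
    rewrite (bigD1 i0) //= big1 ?addr0; last first.
      by move=> j ji; rewrite mxE row_mxEl mxE eq_sym (negbTE ji) scaler0.
    rewrite mxE row_mxEl mxE eqxx.
    by move/eqP; rewrite scaler_eq0 oner_eq0 orbF => /eqP.
  by have := splitK i; case: (split i) => a <-; [exact: Hl | exact: Hr].
set l0 : 'I_k := Ordinal hk.
set c := row l0 G.
set U : 'M[F]_(k, n) := \matrix_(l, j) (if l == l0 then u j else (j == lshift r l)%:R).
have HA := @lemA F L n k c U.
have rels : forall l, \sum_j U l j *: c 0 j = 0.
  move=> l; case: (eqVneq l l0) => [->|nl].
    under eq_bigr do rewrite mxE eqxx.
    exact: rel (row_sub _ _).
  under eq_bigr do rewrite mxE (negbTE nl).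
  rewrite (bigD1 (lshift r l)) //= eqxx scale1r big1 ?addr0.
    by rewrite mxE row_mxEl mxE eq_sym (negbTE nl).
  by move=> j /negbTE ->; rewrite scale0r.
have rU : \rank U = k.
  apply/eqP; apply: inj_row_free => v Hv.
  have v0 : v 0 l0 = 0.
    have := congr1 (fun M : 'rV[F]_n => M 0 (rshift k j1)) Hv.
    rewrite !mxE (bigD1 l0) //= big1 ?addr0.
      by rewrite mxE eqxx => /eqP; rewrite mulf_eq0 (negbTE Hj1) orbF => /eqP.
    by move=> l nl; rewrite mxE (negbTE nl) eq_rlshift mulr0.
  apply/rowP => l; rewrite mxE; case: (eqVneq l l0) => [->//|nl].
  have := congr1 (fun M : 'rV[F]_n => M 0 (lshift r l)) Hv.
  rewrite !mxE (bigD1 l) //= big1 ?addr0.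
    by rewrite mxE (negbTE nl) eqxx mulr1.
  move=> l' nl'; rewrite mxE; case: (eqVneq l' l0) => [->|nl0].
    by rewrite v0 mul0r.
  by rewrite eq_lshift eq_sym (negbTE nl') mulr0.
have cnz : c != 0.
  apply/eqP => /rowP/(_ (lshift r l0)); rewrite mxE [RHS]mxE row_mxEl mxE eqxx.
  by move/eqP; rewrite oner_eq0.
have := mrd_rk (row_sub _ _ : (c <= G)%MS) cnz.
have := HA rels; rewrite rU; lia.
Qed.

Lemma main_sec : is_gen_gabidulin s G <-> \rank (frob_mx s X - X) = 1%N.
Proof.
change (frob_mx s X) with (map_mx sig X).
split.
  by case=> g [_ GM]; exact: fwd GM.
move=> hD1; have [g [gnz Hrows]] := exists_g hD1.
exists g.
have rk := gab_rank gnz Hrows (leqnn k).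
have gG : (gab_mx k s g <= G)%MS.
  by apply/row_subP => i; rewrite row_gab; apply: Hrows.
have GM : (G <= gab_mx k s g)%MS.
  by rewrite -(mxrank_leqif_sup gG).2 rk rankG.
by split; [exact: gab_free GM | rewrite /eqmx GM gG].
Qed.

End Main.

Theorem lemma3p3 (F : finFieldType) (L : fieldExtType F) (k r s : nat)
    (X : 'M[L]_(k, r)) :
  (2 <= \dim {:L})%N -> (1 <= k)%N -> (1 <= r)%N ->
  is_MRD (row_mx 1%:M X) ->
  (0 < s < \dim {:L})%N -> coprime s (\dim {:L}) ->
  is_gen_gabidulin s (row_mx 1%:M X) <->
  \rank (frob_mx s X - X) = 1%N.
Proof.
move=> _ hk hr hMRD /andP[hs _] cop.
exact: main_sec.
Qed.
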